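(* Let $F^a:\mathbb{R}^n\times\mathbb{R}^m\times[0,\infty)\to\mathbb{R}^n$ be an open-loop DT model and $U,V:\mathbb{R}^n\times[0,\infty)\to\mathbb{R}^m$ be control laws. Suppose that (i) $F^a$ is StLC, (ii) $U$ is StL, and (iii) the pair $(U,V)$ is StC. Then $\bar F^a_U$ is EPC with $\bar F^a_V$, where $\bar F^a_U(x,T):=F^a(x,U(x,T),T)$ and $\bar F^a_V(x,T):=F^a(x,V(x,T),T)$.
   Context: $\mathcal{K}_\infty$: continuous, strictly increasing, unbounded $\rho:\mathbb{R}_{\ge0}\to\mathbb{R}_{\ge0}$ with $\rho(0)=0$. StLC: an open-loop DT model $F^a$ is Semiglobally small-time Lipschitz Consistent if for each $M,E\ge0$ there exist $K=K(M,E)>0$, $T^*=T^*(M,E)>0$ such that $|F^a(x,u,T)-F^a(y,v,T)|\le(1+KT)|x-y|+KT|u-v|$ for all $|x|,|y|\le M$, $|u|,|v|\le E$, $T\in[0,T^* )$. StL: $U$ is Semiglobally small-time Lipschitz if for each $M\ge0$ there exist $K=K(M)>0$ and $T^*=T^*(M)>0$, with $T^*(\cdot)$ nonincreasing, such that for all $|x|,|y|\le M$ and $T\in[0,T^* )$: $U(0,T)=0$ and $|U(x,T)-U(y,T)|\le K|x-y|$. StC: the pair $(U,V)$ is Semiglobally small-time convergent Consistent if for each $M\ge0$ there exist $\rho\in\mathcal{K}_\infty$ and $T^*=T^*(M)>0$ such that $|U(x,T)-V(x,T)|\le\rho(T)|x|$ for all $|x|\le M$, $T\in[0,T^* )$.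 EPC: a closed-loop model $\bar F^a:\mathbb{R}^n\times(0,\infty)\to\mathbb{R}^n$ is Equilibrium-Preserving Consistent with $\bar F^b$ if for each $M\ge0$ there exist $K=K(M)>0$, $T^*=T^*(M)>0$ and $\rho\in\mathcal{K}_\infty$ such that $|\bar F^a(x,T)-\bar F^b(y,T)|\le(1+KT)|x-y|+T\rho(T)\max\{|x|,|y|\}$ for all $|x|,|y|\le M$, $T\in(0,T^* )$. *)

(* Defs.v *)
From mathcomp Require Import all_boot all_order all_algebra.
From mathcomp Require Import reals.
Set Implicit Arguments. Unset Strict Implicit. Unset Printing Implicit Defensive.
Import Order.TTheory GRing.Theory Num.Theory.
Local Open Scope ring_scope.

Definition enorm (R : realType) (n : nat) (v : 'rV[R]_n) : R :=
  Num.sqrt (\sum_(i < n) (v 0 i) ^+ 2).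

(* class K_infinity: rho : R>=0 -> R>=0 continuous, strictly increasing,
   unbounded, rho 0 = 0 (only values on [0,oo) matter) *)
Definition K_inf (R : realType) (rho : R -> R) : Prop :=
  rho 0 = 0 /\
  (forall s, 0 <= s -> 0 <= rho s) /\
  (forall s t, 0 <= s -> s < t -> rho s < rho t) /\
  (forall s, 0 <= s -> forall e, 0 < e -> exists2 d, 0 < d &
      forall t, 0 <= t -> `|t - s| < d -> `|rho t - rho s| < e) /\
  (forall B, exists2 s, 0 <= s & B <= rho s).

Definition StLC (R : realType) (n m : nat)
  (Fa : 'rV[R]_n -> 'rV[R]_m -> R -> 'rV[R]_n) : Prop :=
  forall M E : R, 0 <= M -> 0 <= E ->
  exists K Ts : R, 0 < K /\ 0 < Ts /\
   forall (x y : 'rV[R]_n) (u v : 'rV[R]_m) (T : R),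
    enorm x <= M -> enorm y <= M -> enorm u <= E -> enorm v <= E ->
    0 <= T -> T < Ts ->
    enorm (Fa x u T - Fa y v T) <= (1 + K * T) * enorm (x - y) + K * T * enorm (u - v).

Definition StL (R : realType) (n m : nat) (U : 'rV[R]_n -> R -> 'rV[R]_m) : Prop :=
  exists Ts : R -> R,
   (forall M1 M2, 0 <= M1 -> M1 <= M2 -> Ts M2 <= Ts M1) /\
   forall M : R, 0 <= M ->
   exists K : R, 0 < K /\ 0 < Ts M /\
    forall (x y : 'rV[R]_n) (T : R),
     enorm x <= M -> enorm y <= M -> 0 <= T -> T < Ts M ->
     U 0 T = 0 /\ enorm (U x T - U y T) <= K * enorm (x - y).

Definition StC (R : realType) (n m : nat) (U V : 'rV[R]_n -> R -> 'rV[R]_m) : Prop :=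
  forall M : R, 0 <= M ->
  exists rho : R -> R, exists Ts : R, K_inf rho /\ 0 < Ts /\
   forall (x : 'rV[R]_n) (T : R), enorm x <= M -> 0 <= T -> T < Ts ->
    enorm (U x T - V x T) <= rho T * enorm x.

Definition EPC (R : realType) (n : nat) (Fa Fb : 'rV[R]_n -> R -> 'rV[R]_n) : Prop :=
  forall M : R, 0 <= M ->
  exists K Ts : R, exists rho : R -> R, 0 < K /\ 0 < Ts /\ K_inf rho /\
   forall (x y : 'rV[R]_n) (T : R),
    enorm x <= M -> enorm y <= M -> 0 < T -> T < Ts ->
    enorm (Fa x T - Fb y T) <= (1 + K * T) * enorm (x - y)
                               + T * rho T * Num.max (enorm x) (enorm y).

Definition closed_loop (R : realType) (n m : nat)
  (Fa : 'rV[R]_n -> 'rV[R]_m -> R -> 'rV[R]_n) (U : 'rV[R]_n -> R -> 'rV[R]_m)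
  : 'rV[R]_n -> R -> 'rV[R]_n := fun x T => Fa x (U x T) T.

(* Main.v *)
Require Import Defs.
From mathcomp Require Import all_boot all_order all_algebra.
From mathcomp Require Import reals ring lra.
Set Implicit Arguments. Unset Strict Implicit. Unset Printing Implicit Defensive.
Import Order.TTheory GRing.Theory Num.Theory.
Local Open Scope ring_scope.

Section E.
Variables (R : realType) (n : nat).
Implicit Types a b : 'rV[R]_n.

Lemma enorm_ge0 a : 0 <= enorm a.
Proof. exact: sqrtr_ge0. Qed.

Lemma sumsq_ge0 a : 0 <= \sum_(i < n) (a 0 i) ^+ 2.
Proof. by apply: sumr_ge0 => i _; apply: sqr_ge0. Qed.

Lemma enorm_sq a : enorm a ^+ 2 = \sum_(i < n) (a 0 i) ^+ 2.
Proof. by rewrite /enorm sqr_sqrtr // sumsq_ge0. Qed.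

Lemma enorm0 : enorm (0 : 'rV[R]_n) = 0.
Proof. rewrite /enorm big1 ?sqrtr0 // => i _; by rewrite mxE expr0n. Qed.

Lemma enormN a : enorm (- a) = enorm a.
Proof. rewrite /enorm; congr Num.sqrt; apply: eq_bigr => i _; by rewrite mxE sqrrN. Qed.

Lemma enormB a b : enorm (a - b) = enorm (b - a).
Proof. by rewrite -enormN opprB. Qed.

Lemma enorm0_coord a : enorm a = 0 -> forall i, a 0 i = 0.
Proof.
move=> h i; have : \sum_(i < n) (a 0 i) ^+ 2 = 0 by rewrite -enorm_sq h expr0n.
move/psumr_eq0P => H; apply/eqP; rewrite -sqrf_eq0; apply/eqP; apply: H => // j _.
exact: sqr_ge0.
Qed.

Lemma cs a b : \sum_(i < n) a 0 i * b 0 i <= enorm a * enorm b.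
Proof.
set sa := enorm a; set sb := enorm b.
have [sa0|] := eqVneq sa 0.
  rewrite big1; first by rewrite sa0 mul0r.
  by move=> i _; rewrite (enorm0_coord sa0) mul0r.
have [sb0|] := eqVneq sb 0.
  rewrite big1; first by rewrite sb0 mulr0.
  by move=> i _; rewrite (enorm0_coord sb0) mulr0.
move=> nb na.
have pa : 0 < sa by rewrite lt_def na enorm_ge0.
have pb : 0 < sb by rewrite lt_def nb enorm_ge0.
have key : forall i : 'I_n, 2 * (a 0 i * b 0 i) * (sa * sb) <= (a 0 i)^+2 * sb^+2 + (b 0 i)^+2 * sa^+2.
  move=> i; rewrite -subr_ge0.
  have -> : (a 0 i)^+2 * sb^+2 + (b 0 i)^+2 * sa^+2 - 2 * (a 0 i * b 0 i) * (sa * sb)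
      = (a 0 i * sb - b 0 i * sa) ^+ 2 by ring.
  exact: sqr_ge0.
have := ler_sum (index_enum 'I_n) (P := xpredT) (fun i _ => key i).
rewrite big_split /= -!big_distrl /= -big_distrr /= -!enorm_sq -/sa -/sb => h.
have h2 : 2 * (\sum_(i < n) a 0 i * b 0 i) * (sa * sb) <= 2 * (sa * sb) * (sa * sb).
  apply: le_trans h _; rewrite le_eqVlt; apply/orP; left; apply/eqP; ring.
rewrite -(ler_pM2r (mulr_gt0 pa pb)); lra.
Qed.

Lemma enormD a b : enorm (a + b) <= enorm a + enorm b.
Proof.
have e : \sum_(i < n) ((a + b) 0 i) ^+ 2 = enorm a ^+ 2 + 2 * \sum_(i < n) a 0 i * b 0 i + enorm b ^+ 2.
  rewrite !enorm_sq big_distrr -!big_split /=; apply: eq_bigr => i _; rewrite mxE; ring.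
rewrite /enorm -/(enorm a) -/(enorm b) e.
rewrite -(@ger0_norm _ (enorm a + enorm b)) ?addr_ge0 ?enorm_ge0 //.
rewrite -sqrtr_sqr ler_sqrt ?sqr_ge0 //.
have := cs a b; have := enorm_ge0 a; have := enorm_ge0 b; nra.
Qed.
End E.

Lemma eq_le_trans (R : realType) (a b c : R) : a = b -> b <= c -> a <= c.
Proof. by move=> ->. Qed.
Lemma enorm0_ (R : realType) (n : nat) : enorm (0 : 'rV[R]_n) = 0.
Proof. exact: enorm0. Qed.

Lemma K_inf_scale (R : realType) (c : R) (rho : R -> R) :
  0 < c -> K_inf rho -> K_inf (fun t => c * rho t).
Proof.
move=> c0 [r0 [rge [rinc [rc ru]]]]; split; first by rewrite r0 mulr0.
split; first by move=> s s0; apply: mulr_ge0; [exact: ltW | exact: rge].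
split; first by move=> s t s0 st; rewrite ltr_pM2l // rinc.
split.
  move=> s s0 e e0; have [d d0 hd] := rc s s0 (e / c) (divr_gt0 e0 c0).
  exists d => // t t0 td; rewrite -mulrBr normrM gtr0_norm //.
  by rewrite -ltr_pdivlMl // mulrC; apply: hd.
move=> B; have [s s0 hs] := ru (B / c); exists s => //.
by rewrite -ler_pdivrMl // mulrC.
Qed.

Theorem theorem2 (R : realType) (n m : nat)
  (Fa : 'rV[R]_n -> 'rV[R]_m -> R -> 'rV[R]_n)
  (U V : 'rV[R]_n -> R -> 'rV[R]_m) :
  StLC Fa -> StL U -> StC U V ->
  EPC (closed_loop Fa U) (closed_loop Fa V).
Proof.
move=> hF [TsU [_ hU]] hC M M0.
have [KU [KU0 [TsU0 hU']]] := hU M M0.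
have [rho [TsC [hrho [TsC0 hC']]]] := hC M M0.
have [r0 [rge [rinc _]]] := hrho.
pose T1 := Num.min (TsU M) TsC.
have T10 : 0 < T1 by rewrite lt_min TsU0 TsC0.
pose E := KU * M + rho T1 * M.
have E0 : 0 <= E by apply: addr_ge0; apply: mulr_ge0 => //; try exact: ltW; apply: rge; exact: ltW.
have [KF [TsF [KF0 [TsF0 hF']]]] := hF M E M0 E0.
exists (KF * (1 + KU)), (Num.min T1 TsF), (fun t => KF * rho t).
split; first by rewrite mulr_gt0 // ltr_wpDr // ltW.
split; first by rewrite lt_min T10 TsF0.
split; first exact: K_inf_scale.
move=> x y T hx hy T0 hT.
move: hT; rewrite lt_min => /andP [hT1 hTF].
move: hT1; rewrite lt_min => /andP [hTU hTC].
have T0' := ltW T0.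
have Ubound : forall z, enorm z <= M -> enorm (U z T) <= KU * M.
  move=> z hz; have [U00 hl] := hU' z 0 T hz (eq_le_trans (enorm0_ _ _) M0) T0' hTU.
  move: hl; rewrite U00 !subr0 => hl; apply: le_trans hl _.
  by rewrite ler_pM2l.
have rT : rho T <= rho T1 by apply/ltW/rinc; rewrite // lt_min hTU hTC.
have Vbound : forall z, enorm z <= M -> enorm (V z T) <= E.
  move=> z hz; have e : V z T = U z T - (U z T - V z T) by rewrite opprB addrC subrK.
  rewrite e; apply: le_trans (enormD _ _) _; rewrite enormN /E lerD ?Ubound //.
  apply: le_trans (hC' z T hz T0' hTC) _.
  apply: (@le_trans _ _ (rho T * M)); first by rewrite ler_wpM2l ?rge.
  by rewrite ler_wpM2r.
rewrite /closed_loop.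
have UE : KU * M <= E.
  rewrite /E lerDl; apply: mulr_ge0 => //; apply: rge; exact: ltW.
have hFa := hF' x y (U x T) (V y T) T hx hy (le_trans (Ubound x hx) UE) (Vbound y hy) T0' hTF.
have hw : enorm (U x T - V y T) <= KU * enorm (x - y) + rho T * Num.max (enorm x) (enorm y).
  have e : U x T - V y T = (U x T - U y T) + (U y T - V y T)
    by rewrite addrA subrK.
  rewrite e; apply: le_trans (enormD _ _) _; apply: lerD.
    by have [_ ->] := hU' x y T hx hy T0' hTU.
  apply: le_trans (hC' y T hy T0' hTC) _; rewrite ler_wpM2l ?rge //.
  by rewrite le_max lexx orbT.
have KT : 0 <= KF * T by rewrite mulr_ge0 // ltW.
have h3 := ler_wpM2l KT hw.
apply: le_trans hFa _.
have := enorm_ge0 (x - y); have := enorm_ge0 (U x T - V y T).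
move: h3; set d := enorm (x - y); set w := enorm (U x T - V y T).
set mx := Num.max _ _ => h3 _ _.
have ee : (1 + KF * (1 + KU) * T) * d + T * (KF * rho T) * mx
   = (1 + KF * T) * d + KF * T * (KU * d + rho T * mx) by ring.
rewrite ee; lra.
Qed.
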